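(* Let $k\ge2$, $p\in\mathbb{S}^n$, $R\in(0,\pi/2)$, $B_R=\{q:\mathbf{d}_p(q)\le R\}$, $y\in\partial B_R$, and let $\gamma:[R,\pi]\to\mathbb{S}^n$ be the unit-speed minimizing geodesic from $y$ to $-p$, parametrized so that $\mathbf{d}_p(\gamma(s))=s$. Suppose $u$ is a bounded integrable function on $[R,\pi]$. Then the vector field $x\mapsto\int_R^\pi u(s)\Psi_{\gamma(s)}(x)\,ds$ on $B_R\setminus\{y\}$ satisfies \[\int_R^\pi u(s)\Psi_{\gamma(s)}\,ds=o(\mathbf{d}_y^{1-k})\quad\text{as }\mathbf{d}_y\searrow0.\]
   Context: $\mathbb{S}^n$ is the unit round sphere with Levi-Civita connection $\nabla$; $\mathbf{d}_q$ is geodesic distance from $q$. $I_k(r)=\int_0^r\sin^{k-1}s\,ds$, $\varphi(t)=I_k(t)\sin^{1-k}t$ for $t\in(0,\pi)$, $\varphi(0)=0$, $\Phi_q=(\varphi\circ\mathbf{d}_q)\nabla\mathbf{d}_q$ on $\mathbb{S}^n\setminus\{-q\}$, and $\Psi_q:=\Phi_{-q}$ on $\mathbb{S}^n\setminus\{q\}$. *)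

(* Defs.v *)
(* S^n is modelled as the unit sphere of R^{n+1}
   (row vectors 'rV[R]_(n.+1)), tangent vectors as ambient vectors. *)
From HB Require Import structures.
From mathcomp Require Import all_boot all_order all_algebra.
From mathcomp Require Import all_classical all_reals all_analysis.
Set Implicit Arguments. Unset Strict Implicit. Unset Printing Implicit Defensive.
Import Order.TTheory GRing.Theory Num.Theory.
Local Open Scope classical_set_scope.
Local Open Scope ring_scope.

Section Sphere.
Variables (R : realType) (n : nat).
Notation V := 'rV[R]_(n.+1).

Definition dotv (u v : V) : R := \sum_(i < n.+1) u 0 i * v 0 i.
Definition normv (v : V) : R := Num.sqrt (dotv v v).

Definition on_sphere (x : V) : Prop := dotv x x = 1.

Definition gdist (q x : V) : R := acos (dotv q x).

Definition Ik (k : nat) (r : R) : R :=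
  Rintegral lebesgue_measure `[0, r] (fun s => sin s ^+ (k.-1)).

Definition phik (k : nat) (t : R) : R :=
  if t == 0 then 0 else Ik k t / (sin t ^+ (k.-1)).

(* Riemannian gradient of d_q at x (x <> q, -q): the tangential projection of
   the Euclidean gradient of x |-> acos <q,x>, i.e.
   (cos d_q(x) x - q) / sin d_q(x). *)
Definition grad_dist (q x : V) : V :=
  (sin (gdist q x))^-1 *: (cos (gdist q x) *: x - q).

(* Phi_q = (phi o d_q) grad d_q on S^n \ {-q}; at x = q it is 0 since phi(0)=0 *)
Definition Phi (k : nat) (q x : V) : V :=
  if x == q then 0 else phik k (gdist q x) *: grad_dist q x.

Definition Psi (k : nat) (q x : V) : V := Phi k (- q) x.

Definition PsiInt (k : nat) (a b : R) (u : R -> R) (gamma : R -> V) (x : V) : V :=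
  \row_(i < n.+1)
     Rintegral lebesgue_measure `[a, b] (fun s => u s * (Psi k (gamma s) x) 0 i).

End Sphere.

(* Main.v *)
Require Import Defs.
From HB Require Import structures.
From mathcomp Require Import all_boot all_order all_algebra.
From mathcomp Require Import all_classical all_reals all_analysis.
From mathcomp Require Import ring lra.
From mathcomp Require Import measurable_realfun.
Import Order.TTheory GRing.Theory Num.Theory.
Local Open Scope classical_set_scope.
Local Open Scope ring_scope.
Module Helpers.
Import numFieldNormedType.Exports.
Section Int.
Context {R : realType}.
Local Notation mu := (@lebesgue_measure R).

Lemma ge0_le_integral_nm (D : set R) (h1 h2 : R -> \bar R) :
  (forall x, D x -> (0 <= h1 x)%E) -> (forall x, D x -> (h1 x <= h2 x)%E) ->
  (\int[mu]_(x in D) h1 x <= \int[mu]_(x in D) h2 x)%E.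
Proof.
move=> h10 h12.
have h20 : forall x, D x -> (0 <= h2 x)%E.
  by move=> x Dx; exact: le_trans (h10 x Dx) (h12 x Dx).
rewrite (@ge0_integralE _ _ _ mu D h1 h10) (@ge0_integralE _ _ _ mu D h2 h20).
apply: ereal_sup_le => _ [h hh <-].
exists h => //= x; apply: le_trans (hh x) _.
rewrite /patch; case: ifP => // /[1!inE] Dx; exact: h12.
Qed.

Lemma Rint_bound (D : set R) (f g : R -> R) (G : R) :
  (forall s, D s -> `|f s| <= g s) ->
  (\int[mu]_(s in D) (g s)%:E <= G%:E)%E ->
  `|Rintegral mu D f| <= G.
Proof.
move=> fg hG.
have g0 : forall s, D s -> 0 <= g s by move=> s Ds; exact: le_trans (fg s Ds).
have hp : (\int[mu]_(s in D) ((EFin \o f)^\+ s) <= G%:E)%E.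
  apply: le_trans hG; apply: ge0_le_integral_nm => s Ds //=.
  rewrite funeposE /= -EFin_max lee_fin.
  by rewrite ge_max (g0 s Ds) andbT (le_trans (ler_norm _) (fg s Ds)).
have hn : (\int[mu]_(s in D) ((EFin \o f)^\- s) <= G%:E)%E.
  apply: le_trans hG; apply: ge0_le_integral_nm => s Ds //=.
  rewrite funenegE /= -EFin_max lee_fin.
  by rewrite ge_max (g0 s Ds) andbT (le_trans _ (fg s Ds))// -normrN ler_norm.
have p0 : (0 <= \int[mu]_(s in D) ((EFin \o f)^\+ s))%E by apply: integral_ge0.
have n0 : (0 <= \int[mu]_(s in D) ((EFin \o f)^\- s))%E by apply: integral_ge0.
rewrite /Rintegral integralE.
move: p0 hp n0 hn.
case: (\int[mu]_(s in D) ((EFin \o f)^\+ s))%E => [a| |] //;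
case: (\int[mu]_(s in D) ((EFin \o f)^\- s))%E => [b| |] //.
rewrite !lee_fin => a0 aG b0 bG /=.
rewrite ler_norml; apply/andP; split; lra.
Qed.
Lemma int_step (a b e A B : R) : a <= b -> 0 <= A -> 0 <= B -> 0 <= e ->
  (\int[mu]_(s in `[a, b]) ((A * \1_(`[a, a + e]) s + B)%:E)
     <= (A * e + B * (b - a))%:E)%E.
Proof.
move=> ab A0 B0 e0.
have mI : measurable (`[a, a + e] : set R) by [].
under eq_integral => s _ do rewrite EFinD.
rewrite (@ge0_integralD _ _ _ mu `[a, b] _ (fun s => (A * \1_(`[a, a + e]) s)%:E) (fun=> B%:E)); first last.
- by apply/measurable_EFinP.
- by move=> s _; rewrite lee_fin.
- by apply/measurable_EFinP; apply: measurable_funM => //; exact: measurable_indic.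
- by move=> s _; rewrite lee_fin ?mulr_ge0.
- by [].
under eq_integral => s _ do rewrite EFinM.
rewrite ge0_integralZl//; first last.
all: try (by move=> s _; rewrite lee_fin).
all: try (by apply/measurable_EFinP; exact: measurable_indic).
rewrite integral_indic// integral_cst// EFinD.
apply: leeD.
  rewrite EFinM; apply: lee_wpmul2l; first by rewrite lee_fin.
  apply: le_trans (measureIl _ _ _) _; [by []|by []|].
  have E := @lebesgue_measure_itv R `[a, a + e]%R.
  rewrite /= in E; rewrite [X in (X <= _)%E]E.
  rewrite lte_fin; case: ltP => _; last by rewrite lee_fin.
  by rewrite -EFinB lee_fin addrAC subrr add0r.
have E := @lebesgue_measure_itv R `[a, b]%R.
rewrite /= in E; rewrite [X in (_ * X <= _)%E]E.
rewrite lte_fin; case: ltP => h.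
  by rewrite -EFinB -EFinM.
have -> : b = a by apply/eqP; rewrite eq_le ab h.
by rewrite subrr mulr0 mule0.
Qed.
End Int.
Section Trig.
Context {R : realType}.

Lemma sin_le (x y : R) : - (pi / 2) <= x -> x <= y -> y <= pi / 2 -> sin x <= sin y.
Proof.
move=> hx xy hy; rewrite leNgt; apply/negP.
rewrite ltr_sin ?in_itv/= ?hx ?hy ?(le_trans hx xy) ?(le_trans xy hy)//.
by rewrite ltNge xy.
Qed.

Lemma sin_lb (m : R) : 0 <= m -> m <= 1 -> cos 1 * m <= sin m.
Proof.
move=> m0 m1.
have [|c /[!in_itv] /= /andP[c0 cm] E] := @MVT_segment R sin cos 0 m m0
  (fun x _ => is_derive_sin x).
  exact/continuous_subspaceT/continuous_sin.
move: E; rewrite sin0 !subr0 => ->; apply: ler_wpM2r => //.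
rewrite leNgt; apply/negP.
have pi1 : (1 : R) <= pi by apply: le_trans (pi_ge2 _); rewrite ler1n.
rewrite ltr_cos ?in_itv/= ?c0 ?(le_trans cm (le_trans m1 pi1)) ?pi1 ?ler01//.
by rewrite ltNge (le_trans cm m1).
Qed.

Lemma sin_piB (x : R) : sin (pi - x) = sin x.
Proof. by rewrite sinB sinpi cospi mul0r mulN1r opprK add0r. Qed.

Lemma sin_mono_lb (m b D : R) : 0 <= m -> m <= b -> b <= pi / 2 ->
  m <= D -> D <= pi - b -> sin m <= sin D.
Proof.
move=> m0 mb bp mD Db.
have pi0 : 0 < pi :> R := pi_gt0 R.
have [Dle|Dgt] := leP D (pi / 2).
  apply: sin_le => //; lra.
rewrite -(sin_piB D); apply: (@le_trans _ _ (sin b)).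
  apply: sin_le => //; lra.
apply: sin_le; lra.
Qed.

Lemma Ik_bound (k : nat) (t : R) : 0 <= t -> `|Ik k t| <= t.
Proof.
move=> t0; rewrite /Ik; apply: (@Rint_bound _ _ _ (fun _ => 1)).
  move=> s _; rewrite normrX; apply: exprn_ile1 => //; exact: sin_max.
rewrite integral_cst//= lebesgue_measure_itv/= lte_fin.
case: ltP => h; last by rewrite mule0 lee_fin.
by rewrite mul1e -EFinD subr0.
Qed.
End Trig.
Section Arith.
Context {R : realType}.

Lemma pt_bound (m b D : R) (j : nat) : 0 < m -> m <= b -> b <= pi / 2 ->
  m <= D -> D <= pi - b -> m <= 1 ->
  pi / sin D ^+ j <= pi / (cos 1 * m) ^+ j.
Proof.
move=> m0 mb bp mD Db m1.
have c10 : 0 < cos 1 :> R := cos1_gt0 R.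
have cm0 : 0 < cos 1 * m by rewrite mulr_gt0.
have h : cos 1 * m <= sin D.
  apply: le_trans (sin_lb m (ltW m0) m1) _; apply: (sin_mono_lb m b D) => //; exact: ltW m0.
have sD0 : 0 < sin D by exact: lt_le_trans h.
apply: ler_wpM2l; first exact: ltW (pi_gt0 R).
rewrite lef_pV2 ?posrE ?exprn_gt0//.
apply: lerXn2r; rewrite ?nnegrE//; exact: ltW.
Qed.

Lemma final_arith (N K c1 eta d eps r : R) (j : nat) : (1 <= j)%N ->
  0 < N -> 0 < K -> 0 < c1 -> 0 < eta -> 0 < d -> d <= 1 -> 0 < eps ->
  0 <= r -> r <= pi ->
  eta <= eps * c1 ^+ j / (2 * N * K * 2 ^+ j) ->
  d <= eps / (2 * (N * (K / (c1 * eta) ^+ j) * pi)) ->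
  N * (K / (c1 * (d / 2)) ^+ j * eta + K / (c1 * eta) ^+ j * (pi - r))
    <= eps * (d ^+ j)^-1.
Proof.
move=> j1 N0 K0 c0 e0 d0 d1 eps0 r0 rpi he hd.
have pi0 : 0 < pi :> R := pi_gt0 R.
have dj : d ^+ j <= d.
  by have := ler_wiXn2l (ltW d0) d1 j1; rewrite expr1.
have dj0 : 0 < d ^+ j by rewrite exprn_gt0.
set B := K / (c1 * eta) ^+ j.
have B0 : 0 < B by rewrite divr_gt0 ?exprn_gt0 ?mulr_gt0.
have h2 : N * (B * (pi - r)) <= eps / 2 * (d ^+ j)^-1.
  have C0 : 0 < N * B * pi by apply: mulr_gt0 => //; apply: mulr_gt0.
  have : d ^+ j <= eps / (2 * (N * B * pi)) := le_trans dj hd.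
  have C2 : 0 < 2 * (N * B * pi) by apply: mulr_gt0.
  rewrite (ler_pdivlMr _ _ C2) => h.
  rewrite (ler_pdivlMr _ _ dj0).
  have : N * (B * (pi - r)) <= N * B * pi.
    have NB : 0 <= N * B by rewrite mulr_ge0 // ltW.
    by rewrite mulrA; apply: ler_wpM2l => //; lra.
  nra.
have h1 : N * (K / (c1 * (d / 2)) ^+ j * eta) <= eps / 2 * (d ^+ j)^-1.
  have -> : K / (c1 * (d / 2)) ^+ j = K * 2 ^+ j / c1 ^+ j * (d ^+ j)^-1.
    rewrite !exprMn exprVn; field.
    by rewrite !expf_neq0 ?gt_eqF.
  have hc : 0 < c1 ^+ j by rewrite exprn_gt0.
  have h2j : 0 < 2 ^+ j :> R by rewrite exprn_gt0.
  have P0 : 0 < 2 * N * K * 2 ^+ j.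
    by apply: mulr_gt0 => //; apply: mulr_gt0 => //; apply: mulr_gt0.
  move: he; rewrite (ler_pdivlMr _ _ P0) => he.
  have -> : N * (K * 2 ^+ j / c1 ^+ j * (d ^+ j)^-1 * eta) =
    (eta * (2 * N * K * 2 ^+ j)) / (2 * c1 ^+ j) * (d ^+ j)^-1.
    by field; rewrite !gt_eqF.
  apply: ler_wpM2r; first by rewrite invr_ge0 ltW.
  apply: le_trans (_ : eps * c1 ^+ j / (2 * c1 ^+ j) <= _).
    by apply: ler_wpM2r => //; rewrite invr_ge0 mulr_ge0 // ltW.
  by rewrite le_eqVlt; apply/orP; left; apply/eqP; field; rewrite gt_eqF.
rewrite mulrDr; apply: le_trans (lerD h1 h2) _.
by rewrite -mulrDl -splitr.
Qed.
End Arith.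

Section Geo.
Context {R : realType} {n : nat}.
Notation V := 'rV[R]_(n.+1).
Implicit Types u v w a b c x q : V.

Lemma dotvC u v : dotv u v = dotv v u.
Proof. by rewrite /dotv; apply: eq_bigr => i _; rewrite mulrC. Qed.
Lemma dotvDl u v w : dotv (u + v) w = dotv u w + dotv v w.
Proof. by rewrite /dotv -big_split; apply: eq_bigr => i _; rewrite mxE mulrDl. Qed.
Lemma dotvZl (t : R) u w : dotv (t *: u) w = t * dotv u w.
Proof. by rewrite /dotv mulr_sumr; apply: eq_bigr => i _; rewrite mxE mulrA. Qed.
Lemma dotvNl u w : dotv (- u) w = - dotv u w.
Proof. by rewrite /dotv -sumrN; apply: eq_bigr => i _; rewrite mxE mulNr. Qed.
Lemma dotvDr u v w : dotv w (u + v) = dotv w u + dotv w v.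
Proof. by rewrite !(dotvC w) dotvDl. Qed.
Lemma dotvZr (t : R) u w : dotv w (t *: u) = t * dotv w u.
Proof. by rewrite !(dotvC w) dotvZl. Qed.
Lemma dotvNr u w : dotv w (- u) = - dotv w u.
Proof. by rewrite !(dotvC w) dotvNl. Qed.
Lemma dotv_ge0 v : 0 <= dotv v v.
Proof. by rewrite /dotv sumr_ge0// => i _; rewrite -expr2 sqr_ge0. Qed.
Lemma dotv_coord v i : (v 0 i) ^+ 2 <= dotv v v.
Proof.
rewrite /dotv (bigD1 i)//= expr2 lerDl sumr_ge0// => j _.
by rewrite -expr2 sqr_ge0.
Qed.
Lemma dotv_eq0 v w : dotv v v = 0 -> dotv v w = 0.
Proof.
move=> /eqP; rewrite /dotv psumr_eq0; last by move=> i _; rewrite -expr2 sqr_ge0.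
move=> /allP H; apply: big1 => i _.
have := H i (mem_index_enum _); rewrite implyTb mulf_eq0 orbb => /eqP ->.
by rewrite mul0r.
Qed.

Lemma CSl a c :
  - (Num.sqrt (dotv a a) * Num.sqrt (dotv c c)) <= dotv a c.
Proof.
set A := dotv a a; set C := dotv c c; set X := dotv a c.
set s := Num.sqrt C; set t := Num.sqrt A.
have A0 : 0 <= A by exact: dotv_ge0.
have C0 : 0 <= C by exact: dotv_ge0.
have hw := dotv_ge0 (s *: a + t *: c).
rewrite !(dotvDl, dotvDr, dotvZl, dotvZr) -/A -/C -/X (dotvC c a) -/X in hw.
have ss : s * s = C by rewrite -expr2 sqr_sqrtr.
have tt : t * t = A by rewrite -expr2 sqr_sqrtr.
have s0 : 0 <= s by exact: sqrtr_ge0.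
have t0 : 0 <= t by exact: sqrtr_ge0.
have [st0|] := ltP 0 (t * s).
  have : 0 <= (t * s) * (t * s + X).
    clearbody s t; move: hw; rewrite -ss -tt => hw; nra.
  by rewrite pmulr_rge0// => h; rewrite mulrC; lra.
rewrite le_eqVlt => /orP[/eqP|]; last by rewrite ltNge mulr_ge0.
move=> /eqP; rewrite mulf_eq0 => /orP[] /eqP z.
  have : A = 0 by rewrite -tt z mul0r.
  by move/(dotv_eq0 ^~ c) => h; rewrite /X h -/t z mul0r oppr0.
have : C = 0 by rewrite -ss z mul0r.
by move/(dotv_eq0 ^~ a) => h; rewrite /X dotvC h -/s z mulr0 oppr0.
Qed.

Lemma dotv_unit a b : on_sphere a -> on_sphere b -> -1 <= dotv a b <= 1.
Proof.
rewrite /on_sphere => ha hb.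
have h1 := dotv_ge0 (a - b); have h2 := dotv_ge0 (a + b).
rewrite !(dotvDl, dotvDr, dotvNl, dotvNr) ha hb (dotvC b a) in h1 h2.
apply/andP; split; lra.
Qed.

Lemma gdistC a b : gdist a b = gdist b a.
Proof. by rewrite /gdist dotvC. Qed.

Lemma gdist_bnd a b : on_sphere a -> on_sphere b -> 0 <= gdist a b <= pi.
Proof. by move=> ha hb; rewrite /gdist acos_ge0 ?acos_lepi ?dotv_unit. Qed.

Lemma cos_gdist a b : on_sphere a -> on_sphere b -> cos (gdist a b) = dotv a b.
Proof. by move=> ha hb; rewrite /gdist acosK// in_itv/= (dotv_unit _ _ ha hb). Qed.

Lemma gdistN q x : on_sphere q -> on_sphere x -> gdist (- q) x = pi - gdist q x.
Proof. by move=> hq hx; rewrite /gdist dotvNl acosN// (dotv_unit _ _ hq hx). Qed.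

Lemma acos_anti (s t : R) : -1 <= s -> s <= t -> t <= 1 -> acos t <= acos s.
Proof.
move=> s1 st t1.
have hs : -1 <= s <= 1 by rewrite s1/=; exact: le_trans st t1.
have ht : -1 <= t <= 1 by rewrite t1 andbT; exact: le_trans s1 st.
rewrite leNgt; apply/negP => h.
have := h; rewrite -(ltr_cos) ?in_itv/= ?acos_ge0 ?acos_lepi// !acosK ?in_itv//.
by rewrite ltNge st.
Qed.

Lemma gdist_tri a b c : on_sphere a -> on_sphere b -> on_sphere c ->
  gdist a c <= gdist a b + gdist b c.
Proof.
move=> ha hb hc.
set P := dotv a b; set Q := dotv b c; set X := dotv a c.
have hP := dotv_unit _ _ ha hb; have hQ := dotv_unit _ _ hb hc; have hX := dotv_unit _ _ ha hc.
have hcs := CSl (a - P *: b) (c - Q *: b).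
have ha1 : dotv a a = 1 := ha.
have hb1 : dotv b b = 1 := hb.
have hc1 : dotv c c = 1 := hc.
move: hcs; rewrite !(dotvDl, dotvDr, dotvNl, dotvNr, dotvZl, dotvZr).
rewrite ha1 hb1 hc1 -/P -/Q -/X (dotvC b a) -/P (dotvC c b) -/Q.
have -> : 1 - P * P + (- (P * P) - P * - (P * 1)) = 1 - P ^+ 2 by ring.
have -> : 1 - Q * Q + (- (Q * Q) - Q * - (Q * 1)) = 1 - Q ^+ 2 by ring.
have -> : X - Q * P + (- (P * Q) - P * - (Q * 1)) = X - P * Q by ring.
rewrite -(sin_acos hP) -(sin_acos hQ) => hcs.
have hab := gdist_bnd _ _ ha hb; have hbc := gdist_bnd _ _ hb hc.
have ca : cos (gdist a b) = P by exact: cos_gdist.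
have cb : cos (gdist b c) = Q by exact: cos_gdist.
rewrite /gdist -/X.
have [hle|hgt] := leP (gdist a b + gdist b c) pi.
  have hcD : cos (gdist a b + gdist b c) <= X.
    rewrite cosD ca cb /gdist -/P -/Q.
    by move: hcs; rewrite -/P -/Q; lra.
  rewrite -[X in _ <= X]cosK; last first.
    by rewrite in_itv/= hle andbT addr_ge0//; case/andP: hab => //; case/andP: hbc.
  apply: acos_anti => //; [exact: cos_geN1| by case/andP: hX].
apply: le_trans (ltW hgt); apply: acos_lepi; exact: hX.
Qed.


Lemma dotv0_eq v : dotv v v = 0 -> v = 0.
Proof.
move=> /eqP; rewrite /dotv psumr_eq0; last by move=> i _; rewrite -expr2 sqr_ge0.
move=> /allP H; apply/rowP => i; rewrite mxE.
by have := H i (mem_index_enum _); rewrite implyTb mulf_eq0 orbb => /eqP.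
Qed.

Lemma gdist_gt0 a b : on_sphere a -> on_sphere b -> a != b -> 0 < gdist a b.
Proof.
move=> ha hb ab; rewrite /gdist; apply: acos_gt0.
have /andP[h1 h2] := dotv_unit _ _ ha hb; rewrite h1 /= lt_neqAle h2 andbT.
apply/eqP => e; move/eqP: ab; apply.
have ha1 : dotv a a = 1 := ha; have hb1 : dotv b b = 1 := hb.
apply/eqP; rewrite -subr_eq0; apply/eqP/dotv0_eq.
rewrite !(dotvDl, dotvDr, dotvNl, dotvNr) ha1 hb1 (dotvC b a) e; ring.
Qed.

Lemma grad_coord q x i : on_sphere q -> on_sphere x ->
  `|(grad_dist q x) 0 i| <= 1.
Proof.
move=> hq hx.
have hq1 : dotv q q = 1 := hq; have hx1 : dotv x x = 1 := hx.
set c := dotv q x.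
have cc : cos (gdist q x) = c by exact: cos_gdist.
set sg := sin (gdist q x).
have s2 : sg ^+ 2 = 1 - c ^+ 2 by rewrite /sg sin2cos2 cc.
have e : dotv (grad_dist q x) (grad_dist q x) = (sg^-1 * sg) ^+ 2.
  rewrite /grad_dist -/sg cc !(dotvZl, dotvZr, dotvDl, dotvDr, dotvNl, dotvNr).
  rewrite hq1 hx1 (dotvC x q) -/c exprMn s2; ring.
have h1 : dotv (grad_dist q x) (grad_dist q x) <= 1.
  rewrite e; have [->|sg0] := eqVneq sg 0; first by rewrite invr0 mul0r expr0n.
  by rewrite mulVf// expr1n.
have := le_trans (dotv_coord _ i) h1.
set g := (grad_dist q x) 0 i => hg.
rewrite ler_norml; apply/andP; split; nra.
Qed.

Lemma Psi_coord k q x i : on_sphere q -> on_sphere x ->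
  0 < gdist q x -> gdist q x < pi ->
  `|(Psi k q x) 0 i| <= pi / sin (gdist q x) ^+ k.-1.
Proof.
move=> hq hx D0 Dpi.
have sD : 0 < sin (gdist q x) by apply: sin_gt0_pi; rewrite D0 Dpi.
have pi0 : 0 < pi :> R := pi_gt0 R.
have rhs0 : 0 <= pi / sin (gdist q x) ^+ k.-1.
  by rewrite divr_ge0 ?exprn_ge0 ?ltW.
rewrite /Psi /Phi; case: ifP => [_|hxq]; first by rewrite mxE normr0.
have hq' : on_sphere (- q).
  by rewrite /on_sphere dotvNl dotvNr opprK; exact: hq.
rewrite mxE normrM.
have hg := grad_coord _ _ i hq' hx.
rewrite (gdistN _ _ hq hx).
have t0 : (pi - gdist q x == 0) = false by apply/negbTE; rewrite subr_eq0 gt_eqF.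
rewrite /phik t0 sin_piB normrM.
have sj : 0 < sin (gdist q x) ^+ k.-1 by rewrite exprn_gt0.
rewrite (ger0_norm (ltW (_ : 0 < (sin (gdist q x) ^+ k.-1)^-1))); last by rewrite invr_gt0.
have hI : `|Ik k (pi - gdist q x)| <= pi - gdist q x.
  by apply: Ik_bound; rewrite subr_ge0 ltW.
have w0 : 0 < (sin (gdist q x) ^+ k.-1)^-1 by rewrite invr_gt0.
move: w0 hI hg; set I := `|Ik _ _|; set w := (sin _ ^+ _)^-1; set g := `|_|.
have g0 : 0 <= g := normr_ge0 _; have I0 : 0 <= I := normr_ge0 _.
move=> w0 hI hg; rewrite /(_ / _) -/w.
have : I * g <= pi by nra.
by move=> h; rewrite mulrAC ler_pM2r.
Qed.

Lemma normv_le (v : V) (B : R) : 0 <= B -> (forall i, `|v 0 i| <= B) ->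
  normv v <= (n.+1)%:R * B.
Proof.
move=> B0 hv; rewrite /normv.
have NB0 : 0 <= (n.+1)%:R * B by rewrite mulr_ge0.
rewrite -(ger0_norm NB0) -sqrtr_sqr ler_sqrt ?sqr_ge0//.
apply: (@le_trans _ _ (\sum_(i < n.+1) B ^+ 2)).
  apply: ler_sum => i _; have := hv i; rewrite ler_norml => /andP[h1 h2]; nra.
rewrite sumr_const card_ord exprMn -[B ^+ 2 *+ _]mulr_natl.
apply: ler_wpM2r; first exact: sqr_ge0.
by rewrite expr2 ler_peMl// ler1n.
Qed.
End Geo.

End Helpers.
Import Helpers.

Theorem lemma2p12 (R : realType) (n k : nat) (p y : 'rV[R]_(n.+1)) (rho : R)
  (gamma : R -> 'rV[R]_(n.+1)) (u : R -> R) :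
  (2 <= k)%N ->
  on_sphere p -> 0 < rho -> rho < pi / 2 ->
  on_sphere y -> gdist p y = rho ->
  (* gamma : [rho, pi] -> S^n unit-speed minimizing geodesic from y to -p
     with d_p(gamma s) = s *)
  gamma rho = y -> gamma pi = - p ->
  (forall s, rho <= s <= pi -> on_sphere (gamma s)) ->
  (forall s, rho <= s <= pi -> gdist p (gamma s) = s) ->
  (forall s t, rho <= s <= pi -> rho <= t <= pi ->
     gdist (gamma s) (gamma t) = `|s - t|) ->
  (* u bounded and integrable on [rho, pi] *)
  (exists M : R, forall s, rho <= s <= pi -> `|u s| <= M) ->
  lebesgue_measure.-integrable `[rho, pi] (EFin \o u) ->
  (* o(d_y^{1-k}) as d_y -> 0 on B_rho \ {y} *)
  forall eps : R, 0 < eps -> exists delta : R, 0 < delta /\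
    forall x : 'rV[R]_(n.+1), on_sphere x -> gdist p x <= rho -> x != y ->
      gdist y x < delta ->
      normv (PsiInt k rho pi u gamma x) <= eps * (gdist y x ^+ (k.-1))^-1.
Proof.
move=> hk hp R0 Rpi hy hpy g0 gpi gsph gdp giso [M hM] _ eps heps.
have pi0 : 0 < pi :> R := pi_gt0 R.
have rpi : rho <= pi by lra.
have j1 : (1 <= k.-1)%N by case: k hk => // -[].
set j := k.-1.
set M' := `|M| + 1.
have M'0 : 0 < M' by rewrite /M' ltr_wpDl.
have hM' : forall s, rho <= s <= pi -> `|u s| <= M'.
  by move=> s hs; apply: le_trans (hM s hs) _; rewrite /M' (le_trans (ler_norm _))// lerDl.
set c1 : R := cos 1.
have c10 : 0 < c1 := cos1_gt0 R.
set N : R := (n.+1)%:R.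
have N0 : 0 < N by rewrite ltr0n.
set K := M' * pi.
have K0 : 0 < K by rewrite mulr_gt0.
set eta := Order.min (rho / 2) (Order.min 1 (eps * c1 ^+ j / (2 * N * K * 2 ^+ j))).
have P0 : 0 < 2 * N * K * 2 ^+ j.
  by apply: mulr_gt0; rewrite ?exprn_gt0//; apply: mulr_gt0 => //; apply: mulr_gt0.
have eta0 : 0 < eta.
  rewrite /eta !lt_min ltr01 /=; apply/andP; split; first lra.
  by rewrite divr_gt0 // mulr_gt0 // exprn_gt0.
have eta_r : eta <= rho / 2 by rewrite /eta ge_min lexx.
have eta_1 : eta <= 1 by rewrite /eta !ge_min lexx orbT.
have eta_e : eta <= eps * c1 ^+ j / (2 * N * K * 2 ^+ j) by rewrite /eta !ge_min lexx !orbT.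
set B := K / (c1 * eta) ^+ j.
have B0 : 0 < B by rewrite divr_gt0 ?exprn_gt0 ?mulr_gt0.
have C2 : 0 < 2 * (N * B * pi).
  by apply: mulr_gt0 => //; apply: mulr_gt0 => //; apply: mulr_gt0.
exists (Order.min (rho / 2) (Order.min 1 (eps / (2 * (N * B * pi))))).
split.
  rewrite !lt_min ltr01 /=; apply/andP; split; first lra.
  by rewrite divr_gt0.
move=> x hx hxp hxy hd.
set d := gdist y x.
have d0 : 0 < d by apply: gdist_gt0 => //; rewrite eq_sym.
have d_r : d <= rho / 2.
  by apply: ltW; apply: lt_le_trans hd _; rewrite ge_min lexx.
have d_1 : d <= 1.
  by apply: ltW; apply: lt_le_trans hd _; rewrite !ge_min lexx orbT.
have d_e : d <= eps / (2 * (N * B * pi)).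
  by apply: ltW; apply: lt_le_trans hd _; rewrite !ge_min lexx !orbT.
set A := K / (c1 * (d / 2)) ^+ j.
have A0 : 0 < A by rewrite divr_gt0 ?exprn_gt0 ?mulr_gt0.
set Bd := A * eta + B * (pi - rho).
have Bd0 : 0 <= Bd by rewrite /Bd; apply: addr_ge0; apply: mulr_ge0; rewrite ?subr_ge0 // ltW.
apply: le_trans (normv_le _ _ Bd0 _) _; last first.
  exact: (@final_arith R N K c1 eta d eps rho j j1 N0 K0 c10 eta0 d0 d_1 heps (ltW R0) rpi eta_e d_e).
move=> i; rewrite /PsiInt mxE.
apply: (@Rint_bound _ _ _ (fun s => A * \1_(`[rho, rho + eta]) s + B)); last first.
  apply: int_step; [exact: rpi|exact: ltW|exact: ltW|exact: ltW].
move=> s /=; rewrite in_itv /= => hs.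
have hgs := gsph s hs.
have hrr : rho <= rho <= pi by rewrite lexx rpi.
have gsy : gdist (gamma s) y = s - rho.
  by rewrite -g0 giso// ger0_norm// subr_ge0; case/andP: hs.
set D := gdist (gamma s) x.
have T1 : d <= (s - rho) + D.
  by have := gdist_tri _ _ _ hy hgs hx; rewrite (gdistC y (gamma s)) gsy.
have T2 : s <= rho + D.
  have := gdist_tri _ _ _ hp hx hgs; rewrite (gdp s hs) (gdistC x (gamma s)) -/D.
  by move=> h; apply: le_trans h _; rewrite lerD2r.
have T3 : D <= (s - rho) + d.
  by have := gdist_tri _ _ _ hgs hy hx; rewrite gsy.
case/andP: hs => hs1 hs2.
have hps : forall m, 0 < m -> m <= D -> m <= rho / 2 -> m <= 1 ->
    `|u s * (Psi k (gamma s) x) 0 i| <= K / (c1 * m) ^+ j.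
  move=> m m0 mD mr m1.
  have D0 : 0 < D by exact: lt_le_trans mD.
  have Dpi : D <= pi - rho / 2 by lra.
  rewrite normrM /K -mulrA; apply: ler_pM => //.
    by apply: hM'; rewrite hs1 hs2.
  have Dlt : D < pi by lra.
  apply: le_trans (Psi_coord _ _ _ i hgs hx D0 Dlt) _.
  apply: (pt_bound m (rho / 2) D j) => //; lra.
have [sI|sI] := leP s (rho + eta).
  rewrite indicE mem_set; last by rewrite /= in_itv /= hs1 sI.
  have h1 : 0 < d / 2 by lra.
  have h2 : d / 2 <= D by lra.
  have h3 : d / 2 <= rho / 2 by lra.
  have h4 : d / 2 <= 1 by lra.
  apply: le_trans (hps (d / 2) h1 h2 h3 h4) _.
  by rewrite -/A mulr1 lerDl ltW.
rewrite indicE memNset ?mulr0 ?add0r; last first.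
  by rewrite /= in_itv /= hs1 /= leNgt sI.
apply: hps => //; lra.
Qed.
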